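(* Let $d\ge1$, $N\in\mathbb{N}$, $\alpha,\beta>0$ and $p>1/2$. Let $\mathcal{D}^{\rm te}$ be a distribution on $\mathbb{R}^d\times\{\pm1\}$ with $y\sim U(\{\pm1\})$, having one robust coordinate $r\in[d]$ and $d-1$ non-robust coordinates (all others), no irrelevant coordinates, such that $yx_r=\alpha$ with probability $p$ and $yx_r=-\alpha$ with probability $1-p$, and $yx_i=\beta$ with probability one for every $i\ne r$. For the query $(\bm x_{N+1},y_{N+1})$, let $\bm Z$ be formed with $\bm\Delta=\bm 0$ and define $$\tilde f(\bm P,\bm Q):=\mathbb{E}_{\{(\bm x_n,y_n)\}_{n=1}^{N}\overset{\text{i.i.d.}}{\sim}\mathcal{D}^{\rm te}}\big[y_{N+1}[f(\bm Z;\bm P,\bm Q)]_{d+1,N+1}\big],$$ a random variable depending on the query. Let $\bm P^{\rm std}=\bm P^{\rm adv}:=\begin{bmatrix}\bm 0_{d,d+1}\\ \bm 1_{d+1}^\top\end{bmatrix}$, $\bm Q^{\rm std}:=\begin{bmatrix}\bm 1_{d+1,d}&\bm 0_{d+1}\end{bmatrix}$, $\bm Q^{\rm adv}:=\begin{bmatrix}\bm I_d&\bm 0_d\\ \bm 0_d^\top&0\end{bmatrix}$. Then there exist strictly positive quantities $g_1,g_2>0$ depending only on $d,\alpha,\beta,p$ such that: $\tilde f(\bm P^{\rm std},\bm Q^{\rm std})=g_1(\alpha+(d-1)\beta)$ on the event $y_{N+1}x_{N+1,r}=\alpha$ (probability $p$), and $\tilde f(\bm P^{\rm std},\bm Q^{\rm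 std})=g_1(-\alpha+(d-1)\beta)$ on the event $y_{N+1}x_{N+1,r}=-\alpha$ (probability $1-p$); and $\tilde f(\bm P^{\rm adv},\bm Q^{\rm adv})\le g_2\{-(2p-1)\alpha^2+(d-1)\beta^2\}$ on the event $y_{N+1}x_{N+1,r}=-\alpha$ (probability $1-p$).
   Context: $[n]:=\{1,\dots,n\}$; $U(\mathcal S)$ is the uniform distribution on $\mathcal S$; $\bm 1_a,\bm 1_{a,b},\bm 0_a,\bm 0_{a,b},\bm I_a$ denote all-ones/all-zeros vectors and matrices and the identity. Transformer: given demonstrations $(\bm x_1,y_1),\dots,(\bm x_N,y_N)$, a query $\bm x_{N+1}\in\mathbb{R}^d$ and a perturbation $\bm\Delta\in\mathbb{R}^d$, let $\bm Z\in\mathbb{R}^{(d+1)\times(N+1)}$ have $n$-th column $(\bm x_n^\top,y_n)^\top$ for $n\le N$ and last column $((\bm x_{N+1}+\bm\Delta)^\top,0)^\top$. Let $\bm M:=\begin{bmatrix}\bm I_N&0\\0&0\end{bmatrix}$ and $f(\bm Z;\bm P,\bm Q):=\frac1N\bm P\bm Z\bm M\bm Z^\top\bm Q\bm Z$; $[\cdot]_{d+1,N+1}$ is the $(d+1,N+1)$ entry. Demonstrations and query are i.i.d. from $\mathcal{D}^{\rm te}$. *)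

(* Defs.v *)
From mathcomp Require Import all_boot all_order all_algebra.
Set Implicit Arguments. Unset Strict Implicit. Unset Printing Implicit Defensive.
Import Order.TTheory GRing.Theory Num.Theory.
Local Open Scope ring_scope.

Section Transformer.
Variable R : realFieldType.

Definition Zmat (d N : nat) (xs : 'I_N -> 'rV[R]_d) (ys : 'I_N -> R)
    (xq Delta : 'rV[R]_d) : 'M[R]_(d + 1, N + 1) :=
  block_mx (\matrix_(i < d, n < N) xs n 0 i) (xq + Delta)^T
           (\matrix_(i < 1, n < N) ys n) (0 : 'M[R]_(1, 1)).

Definition Mmask (N : nat) : 'M[R]_(N + 1) :=
  block_mx (1%:M : 'M[R]_N) 0 0 (0 : 'M[R]_1).

Definition ftf (d N : nat) (Z : 'M[R]_(d + 1, N + 1)) (P Q : 'M[R]_(d + 1)) :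
    'M[R]_(d + 1, N + 1) :=
  (N%:R)^-1 *: (P *m Z *m Mmask N *m Z^T *m Q *m Z).

Definition last_entry (d N : nat) (A : 'M[R]_(d + 1, N + 1)) : R :=
  A (rshift d (ord0 : 'I_1)) (rshift N (ord0 : 'I_1)).

Definition Pstd (d : nat) : 'M[R]_(d + 1) :=
  col_mx (0 : 'M[R]_(d, d + 1)) (const_mx 1 : 'M[R]_(1, d + 1)).
Definition Padv (d : nat) : 'M[R]_(d + 1) := Pstd d.

Definition Qstd (d : nat) : 'M[R]_(d + 1) :=
  row_mx (const_mx 1 : 'M[R]_(d + 1, d)) (0 : 'M[R]_(d + 1, 1)).

Definition Qadv (d : nat) : 'M[R]_(d + 1) :=
  block_mx (1%:M : 'M[R]_d) 0 0 (0 : 'M[R]_1).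

(* A (discrete) distribution D^te on R^d x R given by finitely many atoms
   j : I with weights w j at points (xs j, ys j).
   ftilde P Q xq yq = E_{(x_n,y_n)_{n<=N} iid ~ D}[ yq * [f(Z;P,Q)]_{d+1,N+1} ]
   where Z is built with Delta = 0 and query (xq, yq). *)
Definition ftilde (d N : nat) (I : finType) (w : I -> R) (xs : I -> 'rV[R]_d)
    (ys : I -> R) (P Q : 'M[R]_(d + 1)) (xq : 'rV[R]_d) (yq : R) : R :=
  \sum_(t : {ffun 'I_N -> I})
     (\prod_(n < N) w (t n)) *
     (yq * last_entry (ftf (Zmat (fun n => xs (t n)) (fun n => ys (t n)) xq 0) P Q)).

Definition is_distr (I : finType) (w : I -> R) : Prop :=
  (forall j, 0 <= w j) /\ \sum_j w j = 1.

End Transformer.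

(* Main.v *)
Require Import Defs.
From mathcomp Require Import all_boot all_order all_algebra.
From mathcomp Require Import ring lra.
Import Order.TTheory GRing.Theory Num.Theory.
Local Open Scope ring_scope.


Lemma Zmat_row (R : realFieldType) d N (xs : 'I_N -> 'rV[R]_d) ys xq :
  Zmat xs ys xq 0 = row_mx (col_mx (\matrix_(i < d, n < N) xs n 0 i) (\matrix_(i < 1, n < N) ys n))
                           (col_mx xq^T 0).
Proof. by rewrite /Zmat addr0 block_mxEh. Qed.

Lemma entry_gen (R : realFieldType) d N (xs : 'I_N -> 'rV[R]_d) ys xq (Q : 'M[R]_(d+1)) :
  last_entry (ftf (Zmat xs ys xq 0) (Pstd R d) Q) =
  N%:R^-1 * \sum_(n < N) (\sum_(k < d + 1) (col_mx (\matrix_(i < d, n < N) xs n 0 i) (\matrix_(i < 1, n < N) ys n)) k n)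
     * \sum_(k < d + 1) (col_mx (\matrix_(i < d, n < N) xs n 0 i) (\matrix_(i < 1, n < N) ys n)) k n
         * (Q *m col_mx xq^T 0) k 0.
Proof.
rewrite /last_entry /ftf Zmat_row.
set Zl := col_mx _ _; set zq := col_mx _ _.
have HZM : row_mx Zl zq *m Mmask R N = row_mx Zl 0.
  by rewrite /Mmask mul_row_block !mulmx0 mulmx1 !addr0.
rewrite -(mulmxA (Pstd R d)) HZM -(mulmxA (Pstd R d)) tr_row_mx mul_row_col mul0mx addr0.
rewrite mxE mul_mx_row row_mxEr.
rewrite /Pstd -!mulmxA mul_col_mx col_mxEd.
congr (_ * _); rewrite mulmxA mxE; apply: eq_bigr => n _.
rewrite !mxE; congr (_ * _).
  by apply: eq_bigr => k _; rewrite mxE mul1r.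
by apply: eq_bigr => k _; rewrite mxE.
Qed.

Lemma sumZl (R : realFieldType) d N (xs : 'I_N -> 'rV[R]_d) ys n :
  \sum_(k < d + 1) (col_mx (\matrix_(i < d, n < N) xs n 0 i) (\matrix_(i < 1, n < N) ys n)) k n
  = \sum_(i < d) xs n 0 i + ys n.
Proof.
rewrite big_split_ord big_ord1 col_mxEd mxE; congr (_ + _).
by apply: eq_bigr => i _; rewrite col_mxEu mxE.
Qed.

Lemma entry_std (R : realFieldType) d N (xs : 'I_N -> 'rV[R]_d) ys xq :
  last_entry (ftf (Zmat xs ys xq 0) (Pstd R d) (Qstd R d)) =
  N%:R^-1 * \sum_(n < N) (\sum_(i < d) xs n 0 i + ys n) ^+ 2 * \sum_(i < d) xq 0 i.
Proof.
rewrite entry_gen; congr (_ * _); apply: eq_bigr => n _.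
rewrite sumZl expr2 -mulrA; congr (_ * _).
have HQ : forall k, (Qstd R d *m col_mx xq^T 0) k 0 = \sum_(i < d) xq 0 i.
  move=> k; rewrite /Qstd mul_row_col mul0mx addr0 mxE.
  by apply: eq_bigr => i _; rewrite !mxE mul1r.
under eq_bigr do rewrite HQ.
by rewrite -mulr_suml sumZl.
Qed.

Lemma entry_adv (R : realFieldType) d N (xs : 'I_N -> 'rV[R]_d) ys xq :
  last_entry (ftf (Zmat xs ys xq 0) (Padv R d) (Qadv R d)) =
  N%:R^-1 * \sum_(n < N) (\sum_(i < d) xs n 0 i + ys n) * \sum_(i < d) xs n 0 i * xq 0 i.
Proof.
rewrite /Padv entry_gen; congr (_ * _); apply: eq_bigr => n _.
rewrite sumZl; congr (_ * _).
rewrite /Qadv mul_block_col !mul0mx mul1mx !addr0.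
rewrite big_split_ord big_ord1 col_mxEd mxE col_mxEd mxE mulr0 /= addr0.
by apply: eq_bigr => i _; rewrite !col_mxEu !mxE.
Qed.

Lemma expect (R : realFieldType) N (I : finType) (w h : I -> R) (m : 'I_N) : \sum_j w j = 1 ->
  \sum_(t : {ffun 'I_N -> I}) (\prod_(n < N) w (t n)) * h (t m) = \sum_j w j * h j.
Proof.
move=> Hw.
have := bigA_distr_bigA (fun (n : 'I_N) (j : I) => w j * (if n == m then h j else 1)).
move=> E.
transitivity (\prod_(n < N) \sum_j w j * (if n == m then h j else 1)).
  rewrite E; apply: eq_bigr => t _.
  rewrite (bigD1 m) //= [in RHS](bigD1 m) //= eqxx -!mulrA; congr (_ * _); rewrite mulrC; congr (_ * _).
  by apply: eq_bigr => n /negbTE ->; rewrite mulr1.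
rewrite (bigD1 m) //= eqxx [X in _ * X]big1 ?mulr1 // => n /negbTE ->.
by under eq_bigr do rewrite mulr1.
Qed.

Lemma support (R : realFieldType) (I : finType) (w : I -> R) (P : pred I) :
  (forall j, 0 <= w j) -> \sum_j w j = 1 -> \sum_(j | P j) w j = 1 ->
  forall j, 0 < w j -> P j.
Proof.
move=> H0 H1 HP j Hj; apply/negPn/negP => nP.
have E : \sum_j w j = \sum_(j | P j) w j + \sum_(j | ~~ P j) w j by rewrite (bigID P).
move: E.
rewrite H1 HP -{1}[1]addr0 => /addrI /esym /eqP.
rewrite psumr_eq0 ?(gt_eqF Hj); last by move=> i _; apply: H0.
move/allP => /(_ j (mem_index_enum j)); rewrite nP /= => /eqP Hw.
by move: Hj; rewrite Hw ltxx.
Qed.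

Lemma two_point (R : realFieldType) (I : finType) (w h : I -> R) (P : pred I) a b q :
  (forall j, 0 < w j -> h j = if P j then a else b) ->
  (forall j, 0 <= w j) -> \sum_j w j = 1 -> \sum_(j | P j) w j = q ->
  \sum_j w j * h j = a * q + b * (1 - q).
Proof.
move=> Hh H0 H1 Hq.
transitivity (\sum_j w j * (if P j then a else b)).
  apply: eq_bigr => j _; have := H0 j; rewrite le_eqVlt => /orP [/eqP <-|/Hh ->] //.
  by rewrite !mul0r.
rewrite (bigID P) /=.
have E : \sum_j w j = \sum_(j | P j) w j + \sum_(j | ~~ P j) w j by rewrite (bigID P).
rewrite H1 Hq in E.
have E2 : \sum_(j | ~~ P j) w j = 1 - q by rewrite E addrC addKr.
rewrite -E2 -Hq.
under eq_bigr => j -> do rewrite mulrC.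
under [X in _ + X = _]eq_bigr => j /negbTE -> do rewrite mulrC.
by rewrite -!mulr_sumr.
Qed.
Lemma ftilde_gen (R : realFieldType) N (I : finType) (w : I -> R) (G : I -> R) c : (0 < N)%N -> \sum_j w j = 1 ->
  \sum_(t : {ffun 'I_N -> I}) (\prod_(n < N) w (t n)) * (c * (N%:R^-1 * \sum_(n < N) G (t n)))
  = \sum_j w j * (c * G j).
Proof.
move=> N0 Hw.
transitivity (c * N%:R^-1 * \sum_(n < N) \sum_(t : {ffun 'I_N -> I}) (\prod_(n < N) w (t n)) * G (t n)).
  rewrite (exchange_big) /= mulr_sumr; apply: eq_bigr => t _.
  rewrite !mulr_sumr; apply: eq_bigr => n _; ring.
under eq_bigr do rewrite expect //.
rewrite big_const_ord iter_addr_0.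
rewrite -mulr_natr. under [in RHS]eq_bigr do rewrite mulrCA. rewrite -mulr_sumr.
have : N%:R != 0 :> R by rewrite pnatr_eq0 -lt0n.
by move=> HN; field.
Qed.
Lemma sum_u (R : realFieldType) d (r : 'I_d) (u : 'I_d -> R) b :
  (forall i, i != r -> u i = b) -> \sum_i u i = u r + (d - 1)%:R * b.
Proof.
move=> H; rewrite (bigD1 r) //=; congr (_ + _).
rewrite (eq_bigr (fun _ => b)) // sumr_const cardC1 card_ord.
by rewrite mulr_natl subn1.
Qed.

Lemma sum_or (R : realFieldType) (I : finType) (w : I -> R) (P Q : pred I) :
  (forall j, P j -> ~~ Q j) ->
  \sum_(j | P j || Q j) w j = \sum_(j | P j) w j + \sum_(j | Q j) w j.
Proof.
move=> H; rewrite (bigID P) /=; congr (_ + _); apply: eq_bigl => j.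
  by case: (P j); rewrite ?andbF ?orTb.
by case Pj: (P j) => /=; [rewrite (negbTE (H j Pj)) | rewrite andbT].
Qed.

Lemma final_ineq (R : realFieldType) (alpha p A B : R) :
  0 < alpha -> 1 / 2 < p -> p <= 1 -> 1 <= A -> 0 <= B ->
  - ((2 * p - 1) * alpha ^+ 2) + B <= 0 ->
  p * ((alpha + A) * (B - alpha ^+ 2)) + (1 - p) * ((- alpha + A) * (B + alpha ^+ 2))
  <= A * (- ((2 * p - 1) * alpha ^+ 2) + B).
Proof.
move=> a0 hp p1 A1 B0 HX.
set c := 2 * p - 1.
have c0 : 0 < c by rewrite /c; lra.
have c1 : c <= 1 by rewrite /c; lra.
have HB : B <= c * alpha ^+ 2 by move: HX; rewrite /c; lra.
have HcB : c * B <= alpha ^+ 2.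
  apply: (le_trans (ler_wpM2l (ltW c0) HB)).
  rewrite mulrA -[X in _ <= X]mul1r ler_wpM2r ?sqr_ge0 //.
  by rewrite -[1]mulr1 ler_pM // ltW.
have E : p * ((alpha + A) * (B - alpha ^+ 2)) + (1 - p) * ((- alpha + A) * (B + alpha ^+ 2))
   = A * (- (c * alpha ^+ 2) + B) + alpha * (c * B - alpha ^+ 2) by rewrite /c; ring.
rewrite E -[X in _ <= X]addr0 lerD2l.
rewrite pmulr_rle0 //; lra.
Qed.

Theorem theorem3p5 (R : realFieldType) (d : nat) (alpha beta p : R) :
  (1 <= d)%N -> 0 < alpha -> 0 < beta -> 1 / 2 < p ->
  exists g1 g2 : R, 0 < g1 /\ 0 < g2 /\
  forall (r : 'I_d) (N : nat) (I : finType)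
         (w : I -> R) (xs : I -> 'rV[R]_d) (ys : I -> R),
    (0 < N)%N ->
    is_distr w ->
    (* y ~ U({+1,-1}) *)
    \sum_(j | ys j == 1) w j = 1 / 2 ->
    \sum_(j | ys j == -1) w j = 1 / 2 ->
    (* robust coordinate r *)
    \sum_(j | ys j * xs j 0 r == alpha) w j = p ->
    \sum_(j | ys j * xs j 0 r == - alpha) w j = 1 - p ->
    (* non-robust coordinates i <> r *)
    (forall i : 'I_d, i != r -> \sum_(j | ys j * xs j 0 i == beta) w j = 1) ->
    (forall j, 0 < w j -> ys j * xs j 0 r = alpha ->
       ftilde N w xs ys (Pstd R d) (Qstd R d) (xs j) (ys j)
         = g1 * (alpha + (d - 1)%:R * beta)) /\
    (forall j, 0 < w j -> ys j * xs j 0 r = - alpha ->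
       ftilde N w xs ys (Pstd R d) (Qstd R d) (xs j) (ys j)
         = g1 * (- alpha + (d - 1)%:R * beta)) /\
    (forall j, 0 < w j -> ys j * xs j 0 r = - alpha ->
       ftilde N w xs ys (Padv R d) (Qadv R d) (xs j) (ys j)
         <= g2 * (- ((2 * p - 1) * alpha ^+ 2) + (d - 1)%:R * beta ^+ 2)).
Proof.
move=> d1 a0 b0 hp.
have A1 : 1 <= (d - 1)%:R * beta + 1.
  by rewrite lerDr mulr_ge0 // ltW.
have B0 : 0 <= (d - 1)%:R * beta ^+ 2 by rewrite mulr_ge0 // sqr_ge0.
move: A1 B0.
set A := (d - 1)%:R * beta + 1.
set B := (d - 1)%:R * beta ^+ 2.
move=> A1 B0.
pose G := p * (alpha + A) ^+ 2 + (1 - p) * (- alpha + A) ^+ 2.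
pose X := - ((2 * p - 1) * alpha ^+ 2) + B.
pose E := p * ((alpha + A) * (B - alpha ^+ 2)) + (1 - p) * ((- alpha + A) * (B + alpha ^+ 2)).
exists (if 0 < G then G else 1),
       (if X < 0 then (if E < 0 then E / X else 1) else Num.max 1 (E / X)).
split; first by case: ifP.
split.
  case: ifP => HX; last by apply: (lt_le_trans ltr01); rewrite le_max lexx.
  case: ifP => HE //.
  by rewrite -mulrNN -invrN divr_gt0 // oppr_gt0.
move=> r N I w xs ys N0 [w0 w1] Hy1 Hym Hra Hrm Hb.
have p1 : p <= 1 by rewrite -subr_ge0 -Hrm sumr_ge0.
have G0 : 0 < G.
  have h1 : 0 < p * (alpha + A) ^+ 2.
    apply: mulr_gt0; first lra. apply: exprn_gt0; lra.
  have h2 : 0 <= (1 - p) * (- alpha + A) ^+ 2 by rewrite mulr_ge0 ?sqr_ge0 //; lra.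
  rewrite /G; lra.
rewrite G0.
have Sy : forall j, 0 < w j -> ys j * ys j = 1.
  move=> j wj.
  have : (ys j == 1) || (ys j == -1).
    apply: (@support R I w (fun j => (ys j == 1) || (ys j == -1)) w0 w1 _ j wj).
    rewrite sum_or ?Hy1 ?Hym; first lra.
    by move=> i /eqP ->; apply/negP => /eqP; lra.
  by case/orP => /eqP ->; rewrite ?mulrNN mulr1.
have Sr : forall j, 0 < w j -> (ys j * xs j 0 r == alpha) || (ys j * xs j 0 r == - alpha).
  move=> j wj.
  apply: (@support R I w (fun j => (ys j * xs j 0 r == alpha) || (ys j * xs j 0 r == - alpha)) w0 w1 _ j wj).
  rewrite sum_or ?Hra ?Hrm; first lra.
  by move=> i /eqP ->; apply/negP => /eqP; lra.
have Sb : forall j i, 0 < w j -> i != r -> ys j * xs j 0 i = beta.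
  move=> j i wj ir; apply/eqP.
  exact: (@support R I w (fun j => ys j * xs j 0 i == beta) w0 w1 (Hb i ir) j wj).
have Ssum : forall j, 0 < w j -> ys j * \sum_k xs j 0 k = ys j * xs j 0 r + (d - 1)%:R * beta.
  move=> j wj; rewrite mulr_sumr; apply: sum_u => i ir; exact: Sb.
have Ss : forall j, 0 < w j -> ys j * (\sum_k xs j 0 k + ys j) = ys j * xs j 0 r + A.
  by move=> j wj; rewrite mulrDr Ssum // Sy // /A addrA.
have Ssq : forall j, 0 < w j -> (\sum_k xs j 0 k + ys j) ^+ 2 = (ys j * xs j 0 r + A) ^+ 2.
  by move=> j wj; rewrite -Ss // exprMn [ys j ^+ 2]expr2 (Sy j wj) mul1r.
have Fstd : forall j0, 0 < w j0 ->
    ftilde N w xs ys (Pstd R d) (Qstd R d) (xs j0) (ys j0)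
    = G * (ys j0 * xs j0 0 r + (d - 1)%:R * beta).
  move=> j0 wj0; rewrite /ftilde.
  under eq_bigr do rewrite entry_std.
  rewrite (ftilde_gen _ _ _ _ (fun i => (\sum_(k < d) xs i 0 k + ys i) ^+ 2 * \sum_(k < d) xs j0 0 k)) //.
  set T := ys j0 * xs j0 0 r + (d - 1)%:R * beta.
  rewrite (@two_point R I w _ (fun j => ys j * xs j 0 r == alpha)
            ((alpha + A) ^+ 2 * T) ((- alpha + A) ^+ 2 * T) p _ w0 w1 Hra); first by rewrite /G; ring.
  move=> j wj; rewrite mulrCA Ssum // Ssq // -/T mulrC.
  case/orP: (Sr j wj) => /eqP ->; rewrite ?eqxx; first by rewrite mulrC.
  rewrite ifF; first by rewrite mulrC.
  apply/eqP; lra.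
have Fadv : forall j0, 0 < w j0 -> ys j0 * xs j0 0 r = - alpha ->
    ftilde N w xs ys (Padv R d) (Qadv R d) (xs j0) (ys j0) = E.
  move=> j0 wj0 Hj0; rewrite /ftilde.
  under eq_bigr do rewrite entry_adv.
  rewrite (ftilde_gen _ _ _ _ (fun i => (\sum_(k < d) xs i 0 k + ys i) * \sum_(k < d) xs i 0 k * xs j0 0 k)) //.
  rewrite (@two_point R I w _ (fun j => ys j * xs j 0 r == alpha)
            ((alpha + A) * (alpha * (- alpha) + B)) ((- alpha + A) * (- alpha * - alpha + B)) p _ w0 w1 Hra); first by rewrite /E; ring.
  move=> j wj.
  have Sdot : \sum_k (ys j * xs j 0 k) * (ys j0 * xs j0 0 k) = ys j * xs j 0 r * (ys j0 * xs j0 0 r) + B.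
    rewrite (@sum_u R d r _ (beta * beta)); first by rewrite /B expr2.
    by move=> i ir; rewrite !Sb.
  have Sdot2 : \sum_k (ys j * xs j 0 k) * (ys j0 * xs j0 0 k) = ys j * ys j0 * \sum_k xs j 0 k * xs j0 0 k.
    by rewrite mulr_sumr; apply: eq_bigr => k _; ring.
  transitivity ((ys j * (\sum_k xs j 0 k + ys j)) * \sum_k (ys j * xs j 0 k) * (ys j0 * xs j0 0 k)).
    rewrite Sdot2 -[LHS]mul1r -(Sy j wj); ring.
  rewrite Sdot Ss // Hj0.
  case/orP: (Sr j wj) => /eqP ->; rewrite ?eqxx //.
  rewrite ifF //; apply/eqP; lra.
split; first by move=> j wj H; rewrite Fstd // H.
split; first by move=> j wj H; rewrite Fstd // H.
move=> j wj H; rewrite Fadv // -/X.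
have key := @final_ineq R alpha p A B a0 hp p1 A1 B0.
rewrite -/X -/E in key.
have [HX|HX|HX] := ltgtP X 0.
- have HE : E < 0.
    apply: (le_lt_trans (key (ltW HX))).
    by rewrite pmulr_rlt0 //; apply: (lt_le_trans ltr01).
  by rewrite ?HX HE divfK // lt_eqF.
- rewrite ?ltNge ?(ltW HX) /=.
  apply: (@le_trans _ _ (E / X * X)); first by rewrite divfK // gt_eqF.
  by rewrite ler_wpM2r ?(ltW HX) // le_max lexx orbT.
- rewrite ?HX ?ltxx mulr0; have := key; rewrite HX lexx mulr0; exact.
Qed.
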